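(* If $G$ is a strongly connected prime tournament, then $G$ is triangle-connected.
   Context: A tournament is a finite, non-null, loopless directed graph in which for any two distinct vertices $u,v$ there is exactly one edge with both ends in $\{u,v\}$; write $u\to v$ for the edge from $u$ to $v$. A homogeneous set of $G$ is a set $X\subseteq V(G)$ such that each $v\in V(G)\setminus X$ either has $v\to x$ for all $x\in X$ or $x\to v$ for all $x\in X$; $G$ is prime if every homogeneous set $X$ satisfies $|X|\le1$ or $X=V(G)$. $G$ is strongly connected if for any two vertices $u,v$ there are directed paths from $u$ to $v$ and from $v$ to $u$. Two cyclic triangles (3-vertex directed cycles) in $G$ are adjacent if they share exactly two vertices; two cyclic triangles $C,C'$ are triangle-connected if there is a sequence $C_1,\dots,C_n$ ($n\ge1$) of cyclic triangles with $C_1=C$, $C_n=C'$, and $C_i$ adjacent to $C_{i+1}$ for all $1\le i\le n-1$. A tournament is triangle-connected if it is strongly connected and any two of its cyclic triangles are triangle-connected. *)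

(* Defs.v *)
From mathcomp Require Import all_boot.
Set Implicit Arguments. Unset Strict Implicit. Unset Printing Implicit Defensive.

Definition tournament (T : finType) (e : rel T) : Prop :=
  0 < #|T| /\ (forall v, ~~ e v v) /\
  (forall u v, u != v -> (e u v && ~~ e v u) || (e v u && ~~ e u v)).

Definition homogeneous (T : finType) (e : rel T) (X : {set T}) : Prop :=
  forall v, v \notin X ->
    (forall x, x \in X -> e v x) \/ (forall x, x \in X -> e x v).

Definition prime_tournament (T : finType) (e : rel T) : Prop :=
  forall X : {set T}, homogeneous e X -> #|X| <= 1 \/ X = setT.

Definition strongly_connected (T : finType) (e : rel T) : Prop :=
  forall u v, connect e u v.

Definition cyclic_triangle (T : finType) (e : rel T) (C : {set T}) : bool :=
  [exists a, exists b, exists c,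
     (C == [set a; b; c]) && [&& e a b, e b c & e c a]].

Definition tri_adj (T : finType) (e : rel T) : rel {set T} :=
  fun C C' => [&& cyclic_triangle e C, cyclic_triangle e C' & #|C :&: C'| == 2].

Definition triangle_connected (T : finType) (e : rel T) : Prop :=
  strongly_connected e /\
  forall C C' : {set T}, cyclic_triangle e C -> cyclic_triangle e C' ->
    connect (tri_adj e) C C'.

(* Main.v *)
Require Import Defs.
From mathcomp Require Import all_boot.
From mathcomp Require Import zify.

Set Implicit Arguments. Unset Strict Implicit. Unset Printing Implicit Defensive.

Section TT.
Variable T : finType.
Variable e : rel T.
Hypothesis irr : forall v, ~~ e v v.
Hypothesis tot : forall u v, u != v -> (e u v && ~~ e v u) || (e v u && ~~ e u v).

Local Notation tri a b c := [set a; b; c].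
Local Notation cyc := (cyclic_triangle e).
Local Notation adj := (tri_adj e).
Local Notation cn := (connect adj).
Local Notation S x y := [set v | e y v && e v x].

Ltac mem := rewrite !inE ?eqxx ?orbT ?orTb //.

Lemma asym u v : e u v -> ~~ e v u.
Proof.
move=> huv.
have nuv : u != v by apply: contraTneq huv => ->; exact: irr.
by case/orP: (tot nuv) => /andP[h1 h2] //; rewrite huv in h2.
Qed.

Lemma tric p q : [\/ p = q, e p q | e q p].
Proof.
case: (eqVneq p q) => [->|n]; first by constructor 1.
by case/orP: (tot n) => /andP[h _]; [constructor 2|constructor 3].
Qed.

Lemma cycP a b c : e a b -> e b c -> e c a -> cyc (tri a b c).
Proof.
move=> h1 h2 h3; apply/existsP; exists a; apply/existsP; exists b;
apply/existsP; exists c; by rewrite eqxx h1 h2 h3.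
Qed.

Lemma card_tri (a b c : T) : #|tri a b c| <= 3.
Proof.
rewrite cardsU cardsU !cards1; lia.
Qed.

Lemma cyc3 C : cyc C -> #|C| <= 3.
Proof.
by case/existsP => a /existsP[b /existsP[c /andP[/eqP -> _]]]; exact: card_tri.
Qed.

Lemma adj_sym : symmetric adj.
Proof.
move=> A B; rewrite /tri_adj setIC.
by case: (cyclic_triangle e A); case: (cyclic_triangle e B).
Qed.

Lemma cs : connect_sym adj.
Proof. exact: sym_connect_sym adj_sym. Qed.

Lemma link T1 T2 u w : cyc T1 -> cyc T2 -> e u w -> u \in T1 -> w \in T1 ->
  u \in T2 -> w \in T2 -> cn T1 T2.
Proof.
move=> c1 c2 huw u1 w1 u2 w2.
case: (eqVneq T1 T2) => [->|n]; first exact: connect0.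
apply: connect1; rewrite /tri_adj c1 c2 /=.
have nuw : u != w by apply: contraTneq huw => ->; exact: irr.
have h2 : 2 <= #|T1 :&: T2|.
  have := subset_leq_card (_ : [set u; w] \subset T1 :&: T2).
  rewrite cards2 nuw; apply.
  by apply/subsetP => z; rewrite !inE => /orP[] /eqP ->; rewrite ?u1 ?u2 ?w1 ?w2.
rewrite eqn_leq h2 andbT leqNgt; apply/negP => h3.
have e1 : T1 :&: T2 = T1.
  apply/eqP; rewrite eqEcard subsetIl; have := cyc3 c1; lia.
have e2 : T1 :&: T2 = T2.
  apply/eqP; rewrite eqEcard subsetIr; have := cyc3 c2; lia.
by move: n; rewrite -e1 {1}e2 eqxx.
Qed.

Lemma conn_ind (P : {set T} -> Prop) A B :
  (forall X Y, P X -> adj X Y -> P Y) -> P A -> cn A B -> P B.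
Proof.
move=> step PA /connectP [p]; elim: p A PA => [|Y p IH] A PA /=.
  by move=> _ ->.
case/andP => hAY hp hB; exact: IH (step _ _ PA hAY) hp hB.
Qed.

Lemma conn_cyc R X : cyc R -> cn R X -> cyc X.
Proof.
move=> cR; apply: (conn_ind (P := fun X => cyc X)) => //.
by move=> X0 Y _ /and3P[].
Qed.

Lemma adj_meet X Y : adj X Y -> exists t, (t \in X) && (t \in Y).
Proof.
case/and3P => _ _ /eqP h.
have : X :&: Y != set0 by rewrite -card_gt0 h.
by case/set0Pn => t; rewrite inE => ht; exists t.
Qed.

Lemma span R : cyc R -> prime_tournament e -> forall v, exists X, cn R X /\ v \in X.
Proof.
move=> cR pr v.
pose Xs := [set u | [exists X, cn R X && (u \in X)]].
suff : Xs = setT.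
  move=> h; have : v \in Xs by rewrite h inE.
  by rewrite inE => /existsP[X /andP[h1 h2]]; exists X.
have inXs : forall X u, cn R X -> u \in X -> u \in Xs.
  by move=> X u h1 h2; rewrite inE; apply/existsP; exists X; rewrite h1.
case: (pr Xs) => //.
- move=> u hu.
  have H1 : forall X, cn R X ->
      (forall t, t \in X -> e u t) \/ (forall t, t \in X -> e t u).
    move=> X hX; have cX := conn_cyc cR hX.
    have uX : u \notin X by apply: contra hu; exact: inXs.
    move: (cX) => /existsP[p /existsP[q /existsP[r /andP[/eqP EX /and3P[hpq hqr hrp]]]]].
    have nup : u != p by apply: contraNneq uX => ->; rewrite EX; mem.
    have nuq : u != q by apply: contraNneq uX => ->; rewrite EX; mem.
    have nur : u != r by apply: contraNneq uX => ->; rewrite EX; mem.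
    have bad : forall a b, a \in X -> b \in X -> e a b -> e b u -> e u a -> False.
      move=> a b ha hb hab hbu hua; apply: (negP hu).
      apply: (inXs (tri a b u)); last by mem.
      apply: (connect_trans hX); apply: (link cX (cycP hab hbu hua) hab) => //; mem.
    have pX : p \in X by rewrite EX; mem.
    have qX : q \in X by rewrite EX; mem.
    have rX : r \in X by rewrite EX; mem.
    have fl : forall z, u != z -> ~~ e u z -> e z u.
      move=> z n nz; case/orP: (tot n) => /andP[h1 h2] //; by rewrite h1 in nz.
    case: (boolP (e u p)) => hp; case: (boolP (e u q)) => hq; case: (boolP (e u r)) => hr.
    + by left => t; rewrite EX !inE => /orP[/orP[]|] /eqP ->.
    + by case: (bad _ _ qX rX hqr (fl _ nur hr) hq).
    + by case: (bad _ _ pX qX hpq (fl _ nuq hq) hp).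
    + by case: (bad _ _ pX qX hpq (fl _ nuq hq) hp).
    + by case: (bad _ _ rX pX hrp (fl _ nup hp) hr).
    + by case: (bad _ _ qX rX hqr (fl _ nur hr) hq).
    + by case: (bad _ _ rX pX hrp (fl _ nup hp) hr).
    + by right => t; rewrite EX !inE => /orP[/orP[]|] /eqP ->; apply: fl.
  have H2 : forall (b : bool), (forall t, t \in R -> (if b then e u t else e t u)) ->
      forall X, cn R X -> forall t, t \in X -> (if b then e u t else e t u).
    move=> b hR X hX.
    pose P := fun X => cn R X /\ forall t, t \in X -> (if b then e u t else e t u).
    have step : forall X0 Y, P X0 -> adj X0 Y -> P Y.
      move=> X0 Y [h0 hX0] hadj.
      have hY : cn R Y := connect_trans h0 (connect1 hadj).
      split => //.
      case: (adj_meet hadj) => t /andP[t1 t2].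
      have ht := hX0 t t1.
      case: (H1 Y hY) => hh; clear P hR; case: b hX0 ht => hX0 ht //.
      - by have := hh t t2; rewrite (negbTE (asym ht)).
      - by have := hh t t2; rewrite (negbTE (asym ht)).
    by case: (conn_ind step (conj (connect0 _ _) hR) hX).
  case: (H1 R (connect0 _ _)) => hR; [left|right] => t;
    rewrite inE => /existsP[X /andP[hX ht]].
  + exact: (H2 true hR X hX).
  + exact: (H2 false hR X hX).
- move: (cR) => /existsP[a /existsP[b /existsP[c /andP[/eqP ER /and3P[hab _ _]]]]].
  have nab : a != b by apply: contraTneq hab => ->; exact: irr.
  have sub : [set a; b] \subset Xs.
    by apply/subsetP => z; rewrite !inE => /orP[] /eqP ->; apply/existsP; exists R;
     rewrite connect0 ER; mem.
  move=> h1; have := subset_leq_card sub; rewrite cards2 nab; lia.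
Qed.

Lemma bridge R R' T1 T2 Z u1 w1 u2 w2 : cn R T1 -> cn R' T2 -> cyc T1 -> cyc T2 -> cyc Z ->
  e u1 w1 -> u1 \in T1 -> w1 \in T1 -> u1 \in Z -> w1 \in Z ->
  e u2 w2 -> u2 \in T2 -> w2 \in T2 -> u2 \in Z -> w2 \in Z -> cn R R'.
Proof.
move=> h1 h2 c1 c2 cZ e1 a1 b1 a2 b2 e2 a3 b3 a4 b4.
apply: (connect_trans h1); apply: (connect_trans (link c1 cZ e1 a1 b1 a2 b2)).
rewrite cs; apply: (connect_trans h2); exact: (link c2 cZ e2 a3 b3 a4 b4).
Qed.

Lemma lnk R T1 (a b c : T) u w : cn R T1 -> cyc T1 -> e a b -> e b c -> e c a ->
  e u w -> u \in T1 -> w \in T1 -> u \in tri a b c -> w \in tri a b c -> cn R (tri a b c).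
Proof.
move=> h c1 hab hbc hca huw *; apply: (connect_trans h).
by apply: (link c1 (cycP hab hbc hca) huw).
Qed.

Section Core.
Variables R R' : {set T}.
Hypothesis nc : ~~ cn R R'.
Variables x y : T.
Hypothesis hxy : e x y.
Hypothesis mx : forall u w z, e u w -> e w z -> e z u -> cn R' (tri u w z) -> #|S u w| <= #|S x y|.

Lemma core a0 b c : e y a0 -> e a0 x -> cn R (tri x y a0) ->
  e a0 b -> e b c -> e c a0 -> cn R' (tri a0 b c) -> (b \in S x y) && (c \in S x y).
Proof.
move=> hya hax hD hab hbc hca hC.
have cD := cycP hxy hya hax; have cC := cycP hab hbc hca.
have hcx : e c x.
  case: (tric c x) => [ecx|//|hxc].
  - subst c; case/negP: nc.
    by apply: (bridge hD hC cD cC cC hax _ _ _ _ hab); mem.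
  - case/negP: nc.
    by apply: (bridge hD hC cD cC (cycP hax hxc hca) hax _ _ _ _ hca); mem.
have hyb : e y b.
  case: (tric y b) => [eyb|//|hby].
  - subst b; case/negP: nc.
    by apply: (bridge hD hC cD cC cC hya _ _ _ _ hbc); mem.
  - case/negP: nc.
    by apply: (bridge hD hC cD cC (cycP hab hby hya) hya _ _ _ _ hab); mem.
case: (tric x b) => [exb | hxb | hbx].
- subst b; by rewrite (negbTE (asym hxy)) in hyb.
- have hZ1 : cn R' (tri x b c) by apply: (lnk hC cC hxb hbc hcx hbc); mem.
  case: (tric y c) => [eyc | hyc | hcy].
  + subst c; by rewrite (negbTE (asym hxy)) in hcx.
  + case/negP: nc.
    by apply: (bridge hD hZ1 cD (cycP hxb hbc hcx) (cycP hxy hyc hcx) hxy _ _ _ _ hcx); mem.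
  + have hZ2 : cn R' (tri b c y) by apply: (lnk hC cC hbc hcy hyb hbc); mem.
    have hbca : cn R' (tri b c a0) by apply: (lnk hC cC hbc hca hab hbc); mem.
    have hle := mx hbc hca hab hbca.
    suff hlt : #|S x y| < #|S b c| by move: (leq_ltn_trans hle hlt); rewrite ltnn.
    apply: proper_card; apply/properP; split; last first.
      by exists x; rewrite !inE ?hcx ?hxb ?(negbTE (irr x)) ?andbF.
    apply/subsetP => v; rewrite !inE => /andP[hyv hvx].
    have hDv : cn R (tri x y v) by apply: (lnk hD cD hxy hyv hvx hxy); mem.
    have cDv := cycP hxy hyv hvx.
    apply/andP; split.
    * case: (tric c v) => [ecv|//|hvc].
      -- subst v; by rewrite (negbTE (asym hcy)) in hyv.
      -- case/negP: nc.
         by apply: (bridge hDv hZ2 cDv (cycP hbc hcy hyb) (cycP hvc hcy hyv) hyv _ _ _ _ hcy); mem.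
    * case: (tric v b) => [evb|//|hbv].
      -- subst v; by rewrite (negbTE (asym hxb)) in hvx.
      -- case/negP: nc.
         by apply: (bridge hDv hZ1 cDv (cycP hxb hbc hcx) (cycP hbv hvx hxb) hvx _ _ _ _ hxb); mem.
- case: (tric y c) => [eyc | hyc | hcy].
  + subst c; by rewrite (negbTE (asym hxy)) in hcx.
  + by rewrite !inE hyb hbx hyc hcx.
  + have hZ1 : cn R (tri b x y) by apply: (lnk hD cD hbx hxy hyb hxy); mem.
    case/negP: nc.
    by apply: (bridge hZ1 hC (cycP hbx hxy hyb) cC (cycP hbc hcy hyb) hyb _ _ _ _ hbc); mem.
Qed.

Lemma inside a0 : e y a0 -> e a0 x -> cn R (tri x y a0) ->
  forall X, cn R' X -> cyc X -> forall t, t \in X -> t \in S x y -> X \subset S x y.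
Proof.
move=> hya hax hD X hX cX t tX tS.
have hDv : forall v, v \in S x y -> cn R (tri x y v).
  move=> v; rewrite inE => /andP[h1 h2].
  by apply: (lnk hD (cycP hxy hya hax) hxy h1 h2 hxy); mem.
have key : forall a b c, e a b -> e b c -> e c a -> cn R' (tri a b c) -> a \in S x y ->
    (b \in S x y) && (c \in S x y).
  move=> a b c h1 h2 h3 h4 ha; move: (ha); rewrite inE => /andP[k1 k2].
  exact: core k1 k2 (hDv a ha) h1 h2 h3 h4.
have fin : forall a b c : T, a \in S x y -> b \in S x y -> c \in S x y -> tri a b c \subset S x y.
  move=> a b c ha hb hc; apply/subsetP => v.
  move=> hv; have : (v == a) || (v == b) || (v == c) by rewrite !inE in hv.
  by case/orP => [/orP[]|] /eqP ->.
case/existsP: cX => p /existsP[q /existsP[r /andP[/eqP EX /and3P[hpq hqr hrp]]]].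
have hp : cn R' (tri p q r) by rewrite -EX.
have hq : cn R' (tri q r p) by apply: (lnk hp (cycP hpq hqr hrp) hqr hrp hpq hqr); mem.
have hr : cn R' (tri r p q) by apply: (lnk hp (cycP hpq hqr hrp) hrp hpq hqr hrp); mem.
have : (t == p) || (t == q) || (t == r) by rewrite EX !inE in tX.
rewrite EX; case/orP => [/orP[]|] /eqP Et; rewrite Et in tS.
- by case/andP: (key _ _ _ hpq hqr hrp hp tS) => h1 h2; apply: fin.
- by case/andP: (key _ _ _ hqr hrp hpq hq tS) => h1 h2; apply: fin.
- by case/andP: (key _ _ _ hrp hpq hqr hr tS) => h1 h2; apply: fin.
Qed.

Lemma noswap a0 : cyc R' -> (forall v, exists X, cn R' X /\ v \in X) ->
  e y a0 -> e a0 x -> cn R (tri x y a0) -> False.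
Proof.
move=> cR' sp hya hax hD.
have a0S : a0 \in S x y by rewrite inE hya hax.
case: (sp a0) => Ta [hTa aTa]; case: (sp x) => Tx [hTx xTx].
pose P := fun X => cn R' X /\ X \subset S x y.
have step : forall X Y, P X -> adj X Y -> P Y.
  move=> X Y [h1 h2] hadj.
  have hY : cn R' Y := connect_trans h1 (connect1 hadj).
  split => //.
  case: (adj_meet hadj) => t /andP[t1 t2].
  apply: (inside hya hax hD hY (conn_cyc cR' hY) t2).
  exact: (subsetP h2).
have P0 : P Ta by split => //; apply: (inside hya hax hD hTa (conn_cyc cR' hTa) aTa a0S).
have hc : cn Ta Tx by apply: (connect_trans _ hTx); rewrite cs.
case: (conn_ind step P0 hc) => _ /subsetP/(_ x xTx).
by rewrite inE (negbTE (irr x)) andbF.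
Qed.

End Core.

Lemma main_tc : strongly_connected e -> prime_tournament e -> triangle_connected e.
Proof.
move=> sc pr; split => // C C' cC cC'.
apply/negPn/negP => nc.
pose Q := fun t : T * T * T => let: (x, y, a) := t in
  [&& e x y, e y a, e a x & cn C (tri x y a) || cn C' (tri x y a)].
pose F := fun t : T * T * T => #|S t.1.1 t.1.2|.
case/existsP: (cC) => a /existsP[b /existsP[c /andP[/eqP EC /and3P[hab hbc hca]]]].
have Q0 : Q (a, b, c) by rewrite /Q hab hbc hca -EC connect0.
case: (arg_maxnP F Q0) => [[[x y] a0]] /= /and4P[hxy hya hax hor] mxm.
have mx : forall R', (R' = C \/ R' = C') -> forall u w z, e u w -> e w z -> e z u ->
    cn R' (tri u w z) -> #|S u w| <= #|S x y|.
  move=> R' hR u w z h1 h2 h3 h4.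
  have := mxm (u, w, z); rewrite /F /=; apply.
  by rewrite /Q h1 h2 h3 /=; case: hR h4 => -> h4; rewrite h4 ?orbT.
case/orP: hor => hD.
- apply: (noswap nc hxy (mx C' (or_intror erefl)) cC' (span cC' pr) hya hax hD).
- have nc' : ~~ cn C' C by rewrite cs.
  apply: (noswap nc' hxy (mx C (or_introl erefl)) cC (span cC pr) hya hax hD).
Qed.

End TT.

Theorem theorem4p1 (T : finType) (e : rel T) :
  tournament e -> strongly_connected e -> prime_tournament e ->
  triangle_connected e.
Proof.
move=> [_ [irr tot]]; exact: main_tc.
Qed.
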